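(* Let $G$ be a connected graph with $m$ edges whose normalized Laplacian spectrum is $\{[\alpha]^{m_1},[\beta]^{m_2},[0]^1\}$ with $2\geq\alpha>\beta>0$ (i.e. $G$ has exactly the three distinct normalized Laplacian eigenvalues $\alpha,\beta,0$, with $0$ simple). Then $\beta\leq 1$, and one of the following holds: (i) $\beta=1$, and every pair of non-adjacent vertices of $G$ have the same neighborhood; (ii) $\beta<1$, and for any two non-adjacent vertices $u,v$ of $G$, $$-\frac{2m(\alpha-1)(\beta-1)}{\alpha\beta}\geq d_u-d_v\geq \frac{2m(\alpha-1)(\beta-1)}{\alpha\beta}.$$
   Context: $d_u$ denotes the degree of vertex $u$. For a graph with adjacency matrix $A$ and diagonal degree matrix $D$ (no isolated vertices), the normalized Laplacian is $\mathcal{L}=I-D^{-1/2}AD^{-1/2}$; its eigenvalues (with multiplicities) form the normalized Laplacian spectrum, written $\{[\lambda_1]^{m_1},\ldots,[\lambda_t]^{m_t}\}$. *)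

(* Defs.v *)
From HB Require Import structures.
From mathcomp Require Import all_boot all_order all_algebra.
From mathcomp Require Import reals.
Set Implicit Arguments. Unset Strict Implicit. Unset Printing Implicit Defensive.
Import Order.TTheory GRing.Theory Num.Theory.
Local Open Scope ring_scope.

Definition simple_graph (n : nat) (adj : rel 'I_n) : Prop :=
  (forall u v, adj u v = adj v u) /\ (forall u, ~~ adj u u).

Definition connected_graph (n : nat) (adj : rel 'I_n) : Prop :=
  forall u v, connect adj u v.

Definition deg (n : nat) (adj : rel 'I_n) (u : 'I_n) : nat := #|[set v | adj u v]|.

Definition nedges (n : nat) (adj : rel 'I_n) : nat :=
  #|[set p : 'I_n * 'I_n | adj p.1 p.2 && (p.1 < p.2)%N]|.

Definition norm_laplacian (R : realType) (n : nat) (adj : rel 'I_n) : 'M[R]_n :=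
  \matrix_(i, j) ((i == j)%:R -
     (adj i j)%:R / (Num.sqrt ((deg adj i)%:R) * Num.sqrt ((deg adj j)%:R))).

(* Main.v *)
Require Import Defs.
From HB Require Import structures.
From mathcomp Require Import all_boot all_order all_algebra.
From mathcomp Require Import reals ring lra.
Import Order.TTheory GRing.Theory Num.Theory.
Local Open Scope ring_scope.

Lemma poly_pow (P : comNzRingType) (A B X : P) m1 m2 : (0 < m1)%N ->
  (A*B*X)^+(m1+m2) = (A^+m1 * B^+m2 * X) * (A^+m2 * B^+m1 * X^+(m1+m2).-1).
Proof.
move=> h; rewrite !exprMn.
have ->: X^+(m1+m2) = X * X^+(m1+m2).-1 by rewrite -exprS prednK // addn_gt0 h.
have ->: B^+(m1+m2) = B^+m2 * B^+m1 by rewrite addnC exprD.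
rewrite exprD.
move: (A^+m1) (A^+m2) (B^+m2) (B^+m1) (X^+(m1+m2).-1) => a1 a2 b2 b1 xk; ring.
Qed.

Section Lap.
Variable R : realType.
Variable n' : nat.
Local Notation n := n'.+1.
Variable adj : rel 'I_n.
Hypothesis adj_sym : forall u v, adj u v = adj v u.
Hypothesis adj_irr : forall u, ~~ adj u u.
Hypothesis degpos : forall u, (0 < deg adj u)%N.
Local Notation L := (norm_laplacian R adj).

Definition aa (u v : 'I_n) : R := (adj u v)%:R.
Definition dd (u : 'I_n) : R := (deg adj u)%:R.
Definition ss (u : 'I_n) : R := Num.sqrt (dd u).

Lemma dd_gt0 u : 0 < dd u.
Proof. by rewrite /dd ltr0n. Qed.

Lemma ss_gt0 u : 0 < ss u.
Proof. by rewrite /ss sqrtr_gt0 dd_gt0. Qed.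

Lemma ss_sq u : ss u * ss u = dd u.
Proof. by rewrite -expr2 /ss sqr_sqrtr // ltW // dd_gt0. Qed.

Lemma dd_sum u : dd u = \sum_w aa u w.
Proof.
rewrite /dd /deg -sum1dep_card natr_sum big_mkcond /=.
by apply: eq_bigr => w _; rewrite /aa; case: (adj u w).
Qed.

Lemma aa_sym u v : aa u v = aa v u.
Proof. by rewrite /aa adj_sym. Qed.

Lemma aa_irr u : aa u u = 0.
Proof. by rewrite /aa (negbTE (adj_irr u)). Qed.

Lemma L_E u v : norm_laplacian R adj u v = (u == v)%:R - aa u v / (ss u * ss v).
Proof. by rewrite mxE. Qed.

Lemma L_sym u v : norm_laplacian R adj u v = norm_laplacian R adj v u.
Proof. by rewrite !L_E eq_sym aa_sym [ss u * _]mulrC. Qed.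

Lemma delta_suml (F : 'I_n -> R) u : \sum_w (u == w)%:R * F w = F u.
Proof.
rewrite (bigD1 u) //= eqxx mul1r big1 ?addr0 // => w /negbTE.
by rewrite eq_sym => ->; rewrite mul0r.
Qed.

Lemma Ls0 u : \sum_w norm_laplacian R adj u w * ss w = 0.
Proof.
under eq_bigr => w _ do rewrite L_E mulrBl.
rewrite sumrB delta_suml.
under eq_bigr => w _ do rewrite invfM mulrA mulfVK ?(gt_eqF (ss_gt0 w)) //.
rewrite -mulr_suml -dd_sum -ss_sq mulrK ?subrr //.
by rewrite unitfE gt_eqF // ss_gt0.
Qed.


Lemma ker_adj (x : 'I_n -> R) :
  (forall u, \sum_w norm_laplacian R adj u w * x w = 0) ->
  forall u v, adj u v -> x u / ss u = x v / ss v.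
Proof.
move=> hx.
pose y w := x w / ss w.
have xy w : x w = ss w * y w by rewrite /y mulrC mulfVK // gt_eqF // ss_gt0.
have harm u : dd u * y u = \sum_w aa u w * y w.
  have := hx u.
  under eq_bigr => w _ do rewrite L_E mulrBl xy.
  rewrite sumrB delta_suml.
  have e w : aa u w / (ss u * ss w) * (ss w * y w) = (aa u w * y w) / ss u.
    by field; rewrite !gt_eqF ?ss_gt0.
  under eq_bigr => w _ do rewrite e.
  rewrite -mulr_suml => /eqP; rewrite subr_eq0 => /eqP h.
  rewrite (_ : \sum_w aa u w * y w = ((\sum_w aa u w * y w) / ss u) * ss u); last first.
    by rewrite mulfVK // gt_eqF // ss_gt0.
  by rewrite -h -ss_sq; ring.
have S : \sum_u \sum_w aa u w * (y u - y w) ^+ 2 = 0.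
  have e u w : aa u w * (y u - y w) ^+ 2 =
     (aa u w * y u ^+ 2 + aa u w * y w ^+ 2) - 2 * (y u * (aa u w * y w)) by ring.
  under eq_bigr => u _ do (under eq_bigr => w _ do rewrite e; rewrite sumrB big_split /= -mulr_sumr -mulr_sumr -harm).
  have A : \sum_u \sum_w aa u w * y w ^+ 2 = \sum_u dd u * y u ^+ 2.
    rewrite exchange_big; apply: eq_bigr => w _; rewrite dd_sum mulr_suml.
    by apply: eq_bigr => u _; rewrite aa_sym.
  have B : \sum_u \sum_w aa u w * y u ^+ 2 = \sum_u dd u * y u ^+ 2.
    by apply: eq_bigr => u _; rewrite dd_sum mulr_suml.
  rewrite sumrB big_split /= A B -mulr_sumr.
  have e3 : \sum_u y u * (dd u * y u) = \sum_u dd u * y u ^+ 2.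
    by apply: eq_bigr => u _; ring.
  rewrite e3; ring.
have nn u w : 0 <= aa u w * (y u - y w) ^+ 2 by rewrite mulr_ge0 ?sqr_ge0 ?ler0n.
move=> u v huv.
have h1 := psumr_eq0P (fun u _ => sumr_ge0 _ (fun w _ => nn u w)) S (isT : true).
have h2 := psumr_eq0P (fun w _ => nn u w) (h1 u) (isT : true).
move: (h2 v); rewrite /aa huv mul1r => /eqP; rewrite sqrf_eq0 subr_eq0 => /eqP.
by [].
Qed.


Lemma ker_const (x : 'I_n -> R) :
  connected_graph adj ->
  (forall u, \sum_w norm_laplacian R adj u w * x w = 0) ->
  forall u v, x u / ss u = x v / ss v.
Proof.
move=> hc hx u v; move: (hc u v) => /connectP [p].
elim: p u => [|w p IH] u /=; first by move=> _ ->.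
move=> /andP [huw hp] hv.
by rewrite (ker_adj x hx u w huw) (IH w hp hv).
Qed.

Lemma deg_sum u : deg adj u = (\sum_w (adj u w : nat))%N.
Proof.
by rewrite /deg -sum1dep_card big_mkcond /=; apply: eq_bigr => w _; case: (adj u w).
Qed.

Lemma handshake : (\sum_u deg adj u = 2 * nedges adj)%N.
Proof.
under eq_bigr => u _ do rewrite deg_sum.
rewrite pair_bigA /= /nedges -sum1dep_card big_mkcond /=.
have e (p : 'I_n * 'I_n) : (adj p.1 p.2 : nat) =
   ((adj p.1 p.2 && (p.1 < p.2)%N) : nat) + ((adj p.1 p.2 && (p.2 < p.1)%N) : nat).
  case: p => i j /=; case h: (adj i j) => //=.
  case: (ltngtP i j) => // /val_inj eij.
  by move: h; rewrite eij (negbTE (adj_irr j)).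
under eq_bigr => p _ do rewrite e.
rewrite big_split /=.
have sw : injective (fun p : 'I_n * 'I_n => (p.2, p.1)) by move=> [? ?] [? ?] [-> ->].
rewrite [X in (_ + X)%N](reindex_inj sw) /=.
under [X in (_ + X)%N]eq_bigr => p _ do rewrite adj_sym.
rewrite addnn -mul2n; congr (2 * _)%N.
by rewrite [RHS]big_mkcond; apply: eq_bigr => p _; case: (_ && _).
Qed.


Lemma Ltr : L^T = L.
Proof. by apply/matrixP => i j; rewrite mxE L_sym. Qed.

Lemma horner_sym p : (horner_mx L p)^T = horner_mx L p.
Proof.
elim/poly_ind: p => [|p c IH]; first by rewrite rmorph0 trmx0.
rewrite rmorphD rmorphM /= horner_mx_X horner_mx_C.
rewrite linearD /= -mulmxE trmx_mul Ltr IH tr_scalar_mx.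
by rewrite (comm_mx_horner p (erefl : comm_mx L L)).
Qed.

Lemma sym_sq0 (B : 'M[R]_n) : B^T = B -> B *m B = 0 -> B = 0.
Proof.
move=> hT hB; apply/matrixP => i j; rewrite mxE.
have : (B *m B) i i = 0 by rewrite hB mxE.
rewrite mxE.
have e k : B i k * B k i = B i k ^+ 2.
  by rewrite expr2; congr (_ * _); rewrite -{1}hT mxE.
under eq_bigr => k _ do rewrite e.
move=> h; have := psumr_eq0P (fun k _ => sqr_ge0 (B i k)) h (isT : true) (i := j).
by move/eqP; rewrite sqrf_eq0 => /eqP.
Qed.

Lemma horner_nil p k : horner_mx L p ^+ k.+1 = 0 -> horner_mx L p = 0.
Proof.
elim: k => [|k IH]; first by rewrite expr1.
move=> h; apply: IH; apply: sym_sq0.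
  by rewrite -rmorphXn horner_sym.
rewrite mulmxE -exprD.
have -> : (k.+1 + k.+1 = k.+2 + k)%N by rewrite addSn addnS.
by rewrite exprD h mul0r.
Qed.

Lemma delta_sumr (F : 'I_n -> R) v : \sum_w F w * (w == v)%:R = F v.
Proof.
rewrite (bigD1 v) //= eqxx mulr1 big1 ?addr0 // => w /negbTE ->.
by rewrite mulr0.
Qed.

Definition QQ u v := \sum_w aa u w * aa w v / dd w.

Lemma LL_E u v : (L *m L) u v =
  (u == v)%:R - 2 * (aa u v / (ss u * ss v)) + QQ u v / (ss u * ss v).
Proof.
rewrite mxE.
have e w : L u w * L w v =
   (u == w)%:R * ((w == v)%:R - aa w v / (ss w * ss v))
   - aa u w / (ss u * ss w) * (w == v)%:R
   + (aa u w * aa w v / dd w) / (ss u * ss v).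
  rewrite !L_E -(ss_sq w).
  have := ss_gt0 w; have := ss_gt0 u;
  have := ss_gt0 v => hv hu hw.
  by field; rewrite ?gt_eqF.
under eq_bigr => w _ do rewrite e.
rewrite !big_split /= ?sumrN delta_suml delta_sumr -mulr_suml /QQ.
ring.
Qed.


Definition EE (al be : R) := horner_mx L (('X - al%:P) * ('X - be%:P)).

Lemma EL0 (al be : R) m1 m2 : (0 < m1)%N -> (0 < m2)%N ->
  char_poly L = ('X - al%:P) ^+ m1 * ('X - be%:P) ^+ m2 * 'X ->
  EE al be *m L = 0.
Proof.
move=> h1 h2 hc.
have : horner_mx L (('X - al%:P) * ('X - be%:P) * 'X) = 0.
  apply: (@horner_nil _ (m1 + m2).-1).
  rewrite prednK ?addn_gt0 ?h1 // -rmorphXn poly_pow // -hc rmorphM /=.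
  by rewrite Cayley_Hamilton mul0r.
by rewrite rmorphM /= horner_mx_X mulmxE.
Qed.

Lemma EE_entry al be u v : EE al be u v =
  (L *m L) u v - (al + be) * L u v + al * be * (u == v)%:R.
Proof.
rewrite /EE rmorphM !rmorphB /= horner_mx_X !horner_mx_C.
rewrite mulrBl !mulrBr -!mulmxE mul_mx_scalar mul_scalar_mx -scalar_mxM.
rewrite !mxE; ring.
Qed.

Lemma E_rank1 al be : connected_graph adj -> EE al be *m L = 0 ->
  exists c, forall u v, EE al be u v = c * ss u * ss v.
Proof.
move=> hc hEL.
have LE : L *m EE al be = 0.
  by rewrite /EE (comm_mx_horner _ (erefl : comm_mx L L)).
have hT : (EE al be)^T = EE al be by rewrite horner_sym.
have kc v w u : EE al be w v / ss w = EE al be u v / ss u.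
  apply: (ker_const (fun w => EE al be w v)) => // u'.
  by move/matrixP: LE => /(_ u' v); rewrite !mxE.
exists (EE al be 0 0 / (ss 0 * ss 0)) => u v.
have e1 := kc v u 0.
have e2 : EE al be 0 v = EE al be v 0 by rewrite -{1}hT mxE.
have e3 := kc 0 v 0.
have := ss_gt0 u; have := ss_gt0 v; have := ss_gt0 0 => h0 hv hu.
have -> : EE al be u v = ss u * (EE al be 0 v / ss 0).
  by rewrite -e1; field; rewrite gt_eqF.
rewrite e2.
have -> : EE al be v 0 = ss v * (EE al be 0 0 / ss 0).
  by rewrite -e3; field; rewrite gt_eqF.
by field; rewrite gt_eqF.
Qed.

Lemma E_s al be u : \sum_v EE al be u v * ss v = al * be * ss u.
Proof.
under eq_bigr => v _ do rewrite EE_entry mulrDl mulrBl.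
rewrite big_split sumrB /=.
have t1 : \sum_v (L *m L) u v * ss v = 0.
  under eq_bigr => v _ do rewrite mxE mulr_suml.
  rewrite exchange_big /= big1 // => w _.
  under eq_bigr => v _ do rewrite -mulrA.
  by rewrite -mulr_sumr Ls0 mulr0.
have t2 : \sum_v (al + be) * L u v * ss v = 0.
  under eq_bigr => v _ do rewrite -mulrA.
  by rewrite -mulr_sumr Ls0 mulr0.
have t3 : \sum_v al * be * (u == v)%:R * ss v = al * be * ss u.
  under eq_bigr => v _ do rewrite -mulrA.
  by rewrite -mulr_sumr delta_suml.
by rewrite t1 t2 t3 subrr add0r.
Qed.

Lemma QQ_sym u v : QQ u v = QQ v u.
Proof. by apply: eq_bigr => w _; rewrite (aa_sym u w) (aa_sym w v) [aa w u * _]mulrC. Qed.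

Lemma QQ_term u v w : 0 <= aa u w * aa w u / dd w - aa u w * aa w v / dd w.
Proof.
rewrite /aa (adj_sym w u); have := dd_gt0 w.
case: (adj u w); case: (adj w v) => /= h; rewrite ?mul0r ?mulr0 ?subrr ?subr0 ?mul1r //.
by rewrite mul0r subr0 invr_ge0 ltW.
Qed.

Lemma QQ_le u v : QQ u v <= QQ u u.
Proof. by rewrite -subr_ge0 /QQ -sumrB; apply: sumr_ge0 => w _; apply: QQ_term. Qed.

Lemma QQ_eq u v : QQ u v = QQ u u -> forall w, adj u w -> adj w v.
Proof.
move=> h w huw.
have h0 : \sum_w (aa u w * aa w u / dd w - aa u w * aa w v / dd w) = 0.
  by rewrite sumrB -/(QQ u u) -/(QQ u v) h subrr.
have := psumr_eq0P (fun w _ => QQ_term u v w) h0 (isT : true) (i := w).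
rewrite /aa huw (adj_sym w u) huw; case: (adj w v) => //= /eqP.
have := dd_gt0 w.
by rewrite !mul1r mul0r subr0 invr_eq0 => /gt_eqF ->.
Qed.

Lemma complete_eig : (forall u v, u != v -> adj u v) ->
  forall lam, lam != 0 -> root (char_poly L) lam -> lam * dd 0 = dd 0 + 1.
Proof.
move=> hcomp lam hl.
rewrite -eigenvalue_root_char => /eigenvalueP [v hv vnz].
have hd u : dd u = dd 0.
  rewrite /dd /deg.
  have e w : [set x | adj w x] = [set~ w].
    apply/setP => x; rewrite !inE; case: (eqVneq x w) => [->|hx].
      by rewrite (negbTE (adj_irr w)).
    by rewrite hcomp // eq_sym.
  by rewrite !e !cardsC1.
have hs u : ss u = ss 0 by rewrite /ss hd.
have h0 := ss_gt0 0.
have hsum : \sum_j v 0 j * ss j = 0.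
  have e1 : \sum_j (v *m L) 0 j * ss j = 0.
    under eq_bigr => j _ do rewrite mxE mulr_suml.
    rewrite exchange_big /= big1 // => i _.
    under eq_bigr => j _ do rewrite -mulrA.
    have : \sum_j L i j * ss j = 0 by apply: Ls0.
    by move=> h; rewrite -mulr_sumr h mulr0.
  move: e1; rewrite hv.
  under eq_bigr => j _ do rewrite mxE -mulrA.
  by rewrite -mulr_sumr => /eqP; rewrite mulf_eq0 (negbTE hl) /= => /eqP.
have hsum' : \sum_j v 0 j = 0.
  move: hsum; under eq_bigr => j _ do rewrite hs.
  rewrite -mulr_suml => /eqP; rewrite mulf_eq0 (gt_eqF h0) orbF => /eqP.
  done.
have hent j : (v *m L) 0 j = v 0 j * (1 + 1 / dd 0).
  rewrite mxE.
  have e i : v 0 i * L i j = (i == j)%:R * v 0 j - (v 0 i - (i == j)%:R * v 0 j) / dd 0.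
    rewrite L_E /aa (hs i) (hs j) ss_sq.
    have := dd_gt0 0 => hd0.
    case: (eqVneq i j) => [->|hij]; first by rewrite (negbTE (adj_irr j)) /=; field; rewrite gt_eqF.
    by rewrite hcomp //=; field; rewrite gt_eqF.
  under eq_bigr => i _ do rewrite e.
  rewrite (@sumrB _ _ _ _ (fun i => (i == j)%:R * v 0 j)).
  have s1 : \sum_i (i == j)%:R * v 0 j = v 0 j.
    by rewrite (bigD1 j) //= eqxx mul1r big1 ?addr0 // => i /negbTE ->; rewrite mul0r.
  have s2 : \sum_i (v 0 i - (i == j)%:R * v 0 j) / dd 0 = (0 - v 0 j) / dd 0.
    by rewrite -mulr_suml sumrB hsum' s1.
  rewrite s1 s2.
  by have := dd_gt0 0 => hd0; field; rewrite gt_eqF.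
have [j hj] : exists j, v 0 j != 0.
  case: (boolP [exists j, v 0 j != 0]) => [/existsP //|/existsPn hall].
  case/eqP: vnz; apply/matrixP => i j; rewrite (ord1 i) !mxE.
  by move: (hall j); rewrite negbK => /eqP.
move/matrixP: hv => /(_ 0 j); rewrite hent mxE => e.
have := dd_gt0 0 => hd0.
apply: (mulIf hj).
rewrite -mulrA [dd 0 * _]mulrC mulrA -e.
by field; rewrite gt_eqF.
Qed.

Lemma Qform al be c : (forall u v, EE al be u v = c * ss u * ss v) ->
  forall u v, QQ u v = c * dd u * dd v
     - (u == v)%:R * (ss u * ss v) * ((al - 1) * (be - 1)) + (2 - (al + be)) * aa u v.
Proof.
move=> hc u v.
have hu := ss_gt0 u; have hv := ss_gt0 v.
have hS : ss u * ss v != 0 by rewrite mulf_neq0 // gt_eqF.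
have h := hc u v; rewrite EE_entry LL_E L_E in h.
have -> : QQ u v = (QQ u v / (ss u * ss v)) * (ss u * ss v) by rewrite mulfVK.
move: (QQ u v / (ss u * ss v)) h => X h.
have -> : X = c * ss u * ss v - (u == v)%:R + 2 * (aa u v / (ss u * ss v))
   + (al + be) * ((u == v)%:R - aa u v / (ss u * ss v)) - al * be * (u == v)%:R.
  by rewrite -h; ring.
rewrite -!ss_sq; field; rewrite ?gt_eqF //.
Qed.

Lemma root_char al be m1 m2 x : (0 < m1)%N -> (0 < m2)%N ->
  char_poly L = ('X - al%:P) ^+ m1 * ('X - be%:P) ^+ m2 * 'X ->
  x = al \/ x = be -> root (char_poly L) x.
Proof.
move=> h1 h2 hch hx; rewrite /root hch !hornerE.
case: hx => ->; rewrite subrr expr0n.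
  by rewrite (negbTE (lt0n_neq0 h1)) !mul0r.
by rewrite (negbTE (lt0n_neq0 h2)) mulr0 mul0r.
Qed.

Lemma main_case (al be : R) m1 m2 : connected_graph adj ->
  (0 < m1)%N -> (0 < m2)%N -> al <= 2 -> be < al -> 0 < be ->
  char_poly L = ('X - al%:P) ^+ m1 * ('X - be%:P) ^+ m2 * 'X ->
  let m : R := (nedges adj)%:R in
  let K : R := 2 * m * (al - 1) * (be - 1) / (al * be) in
  be <= 1 /\
  ((be = 1 /\ forall u v : 'I_n, u != v -> ~~ adj u v ->
                  forall w, adj u w = adj v w)
   \/
   (be < 1 /\ forall u v : 'I_n, u != v -> ~~ adj u v ->
                  - K >= (deg adj u)%:R - (deg adj v)%:R
                  /\ (deg adj u)%:R - (deg adj v)%:R >= K)).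
Proof.
move=> hcon h1 h2 ha2 hba hb0 hch m K.
have hEL := @EL0 al be m1 m2 h1 h2 hch.
have [c hc] := E_rank1 _ _ hcon hEL.
have ha0 : 0 < al by apply: lt_trans hba.
have hab : 0 < al * be by rewrite mulr_gt0.
have hsum : c * (2 * m) = al * be.
  have := E_s al be 0; under eq_bigr => v _ do rewrite hc.
  have e v : c * ss 0 * ss v * ss v = c * ss 0 * dd v by rewrite -mulrA ss_sq.
  under eq_bigr => v _ do rewrite e.
  rewrite -mulr_sumr.
  have -> : \sum_v dd v = 2 * m.
    by rewrite /dd -natr_sum handshake // natrM.
  move=> h; have hs0 := ss_gt0 0.
  by rewrite -[al * be](mulfK (lt0r_neq0 hs0)) -h; field; rewrite gt_eqF //.
have hm : 0 <= m by rewrite ler0n.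
have hc0 : 0 < c.
  rewrite ltNge; apply/negP => hcn.
  have : c * (2 * m) <= 0 by apply: mulr_le0_ge0 => //; rewrite mulr_ge0.
  by rewrite hsum leNgt hab.
have hm0 : 0 < m.
  rewrite lt_neqAle hm andbT; apply/negP => /eqP hm0.
  by move: hab; rewrite -hsum -hm0 !mulr0 ltxx.
have Q := Qform _ _ _ hc.
set D := (al - 1) * (be - 1).
have ineq u v : u != v -> ~~ adj u v ->
   c * dd v <= c * dd u - D /\ QQ u v = c * dd u * dd v /\ QQ u u = c * dd u * dd u - dd u * D.
  move=> huv hn.
  have quv : QQ u v = c * dd u * dd v.
    by rewrite Q (negbTE huv) /aa (negbTE hn) /=; ring.
  have quu : QQ u u = c * dd u * dd u - dd u * D.
    by rewrite Q eqxx aa_irr ss_sq /=; rewrite -/D; ring.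
  split; last by split.
  have := QQ_le u v; rewrite quv quu => hle.
  have hdu := dd_gt0 u.
  rewrite -(ler_pM2l hdu); nra.
have [u0 [v0 [huv0 hn0]]] : exists u v, u != v /\ ~~ adj u v.
  case: (boolP [exists u, exists v, (u != v) && ~~ adj u v]).
    by move=> /existsP [u /existsP [v /andP [h h']]]; exists u, v.
  move=> /existsPn hall.
  have hcomp : forall u v, u != v -> adj u v.
    move=> u v huv; move: (hall u) => /existsPn /(_ v).
    by rewrite negb_and huv /= negbK.
  have ea := complete_eig hcomp al (lt0r_neq0 ha0) (@root_char al be m1 m2 al h1 h2 hch (or_introl erefl)).
  have eb := complete_eig hcomp be (lt0r_neq0 hb0) (@root_char al be m1 m2 be h1 h2 hch (or_intror erefl)).
  have hd0 := dd_gt0 0.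
  have : al * dd 0 = be * dd 0 by rewrite ea eb.
  by move/(mulIf (lt0r_neq0 hd0)) => e; move: hba; rewrite e ltxx.
have hD : D <= 0.
  have [i1 _ ] := ineq u0 v0 huv0 hn0.
  have hvu0 : v0 != u0 by rewrite eq_sym.
  have hnv0 : ~~ adj v0 u0 by rewrite adj_sym.
  have [i2 _ ] := ineq v0 u0 hvu0 hnv0.
  lra.
have hbe1 : be <= 1.
  rewrite leNgt; apply/negP => hb1.
  have : 0 < D by rewrite /D mulr_gt0 // subr_gt0 // (lt_trans hb1 hba).
  by rewrite ltNge hD.
split => //.
case: (eqVneq be 1) => [hb1|hb1].
  left; split => // u v huv hn w.
  have hD0 : D = 0 by rewrite /D hb1 subrr mulr0.
  have [i1 [q1 q2]] := ineq u v huv hn.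
  have hvu : v != u by rewrite eq_sym.
  have hnv : ~~ adj v u by rewrite adj_sym.
  have [i2 [q3 q4]] := ineq v u hvu hnv.
  rewrite hD0 in i1 i2 q2 q4.
  have ecd : c * dd u = c * dd v by lra.
  have e1 : QQ u v = QQ u u by rewrite q1 q2 -mulrA [dd u * _]mulrC mulrA ecd; ring.
  have e2 : QQ v u = QQ v v by rewrite q3 q4 -mulrA [dd v * _]mulrC mulrA -ecd; ring.
  apply/idP/idP => h.
    by rewrite adj_sym (QQ_eq _ _ e1 _ h).
  by rewrite adj_sym (QQ_eq _ _ e2 _ h).
right; split; first by rewrite lt_neqAle hb1.
move=> u v huv hn.
have [i1 _] := ineq u v huv hn.
have hvu : v != u by rewrite eq_sym.
have hnv : ~~ adj v u by rewrite adj_sym.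
have [i2 _] := ineq v u hvu hnv.
have hK : K * c = D.
  rewrite /K -hsum /D; field.
  by rewrite !gt_eqF.
rewrite -/(dd u) -/(dd v).
split.
  rewrite -(ler_pM2r hc0) mulNr hK; lra.
rewrite -(ler_pM2r hc0) hK; lra.
Qed.

End Lap.

Theorem lemma2p4 (R : realType) (n : nat) (adj : rel 'I_n)
  (alpha beta : R) (m1 m2 : nat) :
  simple_graph adj -> connected_graph adj ->
  (forall u, (0 < deg adj u)%N) ->
  (0 < m1)%N -> (0 < m2)%N ->
  alpha <= 2 -> beta < alpha -> 0 < beta ->
  char_poly (norm_laplacian R adj) =
    ('X - alpha%:P) ^+ m1 * ('X - beta%:P) ^+ m2 * 'X ->
  let m : R := (nedges adj)%:R in
  let K : R := 2 * m * (alpha - 1) * (beta - 1) / (alpha * beta) in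
  beta <= 1 /\
  ((beta = 1 /\ forall u v : 'I_n, u != v -> ~~ adj u v ->
                  forall w, adj u w = adj v w)
   \/
   (beta < 1 /\ forall u v : 'I_n, u != v -> ~~ adj u v ->
                  - K >= (deg adj u)%:R - (deg adj v)%:R
                  /\ (deg adj u)%:R - (deg adj v)%:R >= K)).
Proof.
case: n adj => [|n'] adj [hsym hirr] hcon hdeg h1 h2 ha2 hba hb0 hch.
  exfalso.
  have := congr1 (fun p => p.[0]) hch.
  rewrite /char_poly det_mx00 hornerC !hornerE => /eqP.
  by rewrite oner_eq0.
exact: (@main_case R n' adj hsym hirr hdeg alpha beta m1 m2 hcon h1 h2 ha2 hba hb0 hch).
Qed.
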